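(* The zero-error capacity of the $(w,d)$ sliding-window erasure channel with input alphabet of size $q$ satisfies $C_0\ge 1-\frac{1}{w}\log_q V^w_d(q)$.
   Context: $V^n_r(q)=\sum_{i=0}^{r}\binom{n}{i}(q-1)^i$. Integers $w\ge1$, $0\le d\le w$, $q\ge2$, $|\mathcal{X}|=q$. The $(w,d)$ sliding-window erasure channel: a noise word $v(0:n-1)\in\{0,1\}^n$ is admissible if for some initial pattern $v(-w:-1)\in\{0,1\}^w$ every $w$ consecutive entries of $(v(-w),\dots,v(n-1))$ contain at most $d$ ones; output $y(t)=x(t)$ if $v(t)=0$ and $y(t)=*$ (a symbol not in $\mathcal{X}$) if $v(t)=1$. A zero-error code of length $n$ is a set $\mathcal{F}\subseteq\mathcal{X}^n$ such that no output word can be produced by two distinct codewords under admissible noise; $C_0=\sup_n\sup_{\mathcal{F}}\log_q|\mathcal{F}|/n$. *)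

(* Defs.v *)
From Stdlib Require Import Reals List Arith.
Import ListNotations.
Open Scope R_scope.

Definition logq (q : nat) (x : R) : R := ln x / ln (INR q).

Definition Vball (n r q : nat) : R :=
  sum_f_R0 (fun i => Binomial.C n i * (INR q - 1) ^ i) r.

Definition is_word (q n : nat) (x : list nat) : Prop :=
  length x = n /\ Forall (fun a => (a < q)%nat) x.

Definition ones (v : list bool) : nat := count_occ Bool.bool_dec v true.

Definition windows_ok (w d : nat) (s : list bool) : Prop :=
  forall i, (i + w <= length s)%nat -> (ones (firstn w (skipn i s)) <= d)%nat.

(* admissible noise word v(0:n-1): some initial pattern v(-w:-1) of length w
   such that (v(-w),...,v(n-1)) satisfies the window constraint *)
Definition admissible (w d n : nat) (v : list bool) : Prop :=
  length v = n /\
  exists init : list bool, length init = w /\ windows_ok w d (init ++ v).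

(* channel output: None is the erasure symbol * *)
Definition output (x : list nat) (v : list bool) : list (option nat) :=
  map (fun p : nat * bool => if snd p then None else Some (fst p)) (combine x v).

(* F is a code of length n over the alphabet of size q (a finite set of words,
   represented as a duplicate-free list) *)
Definition is_code (q n : nat) (F : list (list nat)) : Prop :=
  NoDup F /\ Forall (is_word q n) F.

Definition zero_error (w d n : nat) (F : list (list nat)) : Prop :=
  forall x1 x2 v1 v2, In x1 F -> In x2 F ->
    admissible w d n v1 -> admissible w d n v2 ->
    output x1 v1 = output x2 v2 -> x1 = x2.

(* Main.v *)
Require Import Defs.
From Stdlib Require Import Reals List Arith Lia Lra.
Import ListNotations.
Open Scope R_scope.

Fixpoint hdist (x y : list nat) : nat :=
  match x, y with
  | a :: x', b :: y' => ((if Nat.eqb a b then 0 else 1) + hdist x' y')%nat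
  | _, _ => 0%nat
  end.

Lemma dist_refl x : hdist x x = 0%nat.
Proof. induction x; simpl; auto. rewrite Nat.eqb_refl; auto. Qed.

Lemma dist_sym x y : hdist x y = hdist y x.
Proof.
  revert y; induction x; destruct y; simpl; auto.
  rewrite IHx, Nat.eqb_sym; auto.
Qed.

Lemma ones_cons b v : ones (b :: v) = ((if b then 1 else 0) + ones v)%nat.
Proof. unfold ones; destruct b; simpl; reflexivity. Qed.

Lemma dist_output x1 x2 v1 v2 :
  length x1 = length v1 -> length x2 = length v2 -> length x1 = length x2 ->
  output x1 v1 = output x2 v2 -> (hdist x1 x2 <= ones v1)%nat.
Proof.
  revert x2 v1 v2; induction x1 as [|a x1 IH]; intros x2 v1 v2 H1 H2 H3 Ho.
  - simpl; lia.
  - destruct x2 as [|b x2]; [simpl in H3; lia|].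
    destruct v1 as [|c v1]; [simpl in H1; lia|].
    destruct v2 as [|e v2]; [simpl in H2; lia|].
    simpl in H1, H2, H3. unfold output in Ho. simpl in Ho.
    injection Ho as Hh Ht.
    assert (Hr := IH x2 v1 v2 ltac:(lia) ltac:(lia) ltac:(lia) Ht).
    rewrite ones_cons. simpl.
    destruct c, e; try discriminate.
    + destruct (Nat.eqb a b); lia.
    + injection Hh as ->. rewrite Nat.eqb_refl. lia.
Qed.

Lemma filter_filter_le {A} (p r : A -> bool) l :
  (length (filter p (filter r l)) <= length (filter p l))%nat.
Proof.
  induction l; simpl; auto. destruct (r a); simpl; destruct (p a); simpl; lia.
Qed.

Lemma greedy (d B : nat) : forall n (L : list (list nat)), (length L <= n)%nat ->
  (forall x, In x L -> (length (filter (fun y => hdist x y <=? d) L) <= B)%nat) ->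
  exists C, NoDup C /\ incl C L /\
    (forall x y, In x C -> In y C -> x <> y -> (d < hdist x y)%nat) /\
    (length L <= length C * B)%nat.
Proof.
  induction n; intros L HL HB.
  - destruct L; simpl in HL; [|lia]. exists []. repeat split; simpl; auto.
    constructor. intros a Ha; inversion Ha. intros x y []. 
  - destruct L as [|x L0].
    + exists []. repeat split; simpl; auto. constructor. intros a Ha; inversion Ha. intros ? ? [].
    + set (P := fun y => hdist x y <=? d).
      set (L' := filter (fun y => negb (P y)) L0).
      assert (HL' : (length L' <= n)%nat).
      { pose proof (filter_length P L0). simpl in HL. unfold L'. lia. }
      assert (HB' : forall z, In z L' -> (length (filter (fun y => hdist z y <=? d) L') <= B)%nat).
      { intros z Hz. unfold L' in Hz |- *. apply filter_In in Hz as [Hz _].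
        eapply Nat.le_trans; [apply filter_filter_le|].
        eapply Nat.le_trans; [|apply (HB z (or_intror Hz))]. simpl.
        destruct (hdist z x <=? d); simpl; lia. }
      destruct (IHn L' HL' HB') as [C [HN [Hi [Hp Hl]]]].
      assert (HxL' : ~ In x L').
      { unfold L'; intros Hx; apply filter_In in Hx as [_ Hx]. unfold P in Hx.
        rewrite dist_refl in Hx. simpl in Hx. discriminate. }
      exists (x :: C). repeat split.
      * constructor; auto.
      * intros z [<-|Hz]; [left; auto|right]. apply Hi in Hz. unfold L' in Hz.
        apply filter_In in Hz; tauto.
      * assert (Hfar : forall z, In z C -> (d < hdist x z)%nat).
        { intros z Hz. apply Hi in Hz. unfold L' in Hz. apply filter_In in Hz as [_ Hz].
          unfold P in Hz. destruct (hdist x z <=? d) eqn:E; simpl in Hz; try discriminate.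
          apply Nat.leb_gt in E; auto. }
        intros a b [<-|Ha] [<-|Hb] Hne.
        -- congruence.
        -- auto.
        -- rewrite dist_sym; auto.
        -- auto.
      * pose proof (filter_length P L0). pose proof (HB x (or_introl eq_refl)).
        simpl in H0. rewrite dist_refl in H0. simpl in H0 |- *. fold P in H0.
        unfold L' in Hl. lia.
Qed.

Fixpoint words (q n : nat) : list (list nat) :=
  match n with
  | O => [[]]
  | S n' => flat_map (fun b => map (cons b) (words q n')) (seq 0 q)
  end.

Lemma length_flat_map_filter {A B} (p : B -> bool) (g : A -> list B) l :
  length (filter p (flat_map g l)) =
  fold_right (fun b acc => (length (filter p (g b)) + acc)%nat) 0%nat l.
Proof.
  induction l; simpl; auto. rewrite filter_app, length_app, IHl; auto.
Qed.

Lemma words_length q n : length (words q n) = (q ^ n)%nat.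
Proof.
  induction n; simpl; auto.
  transitivity (fold_right (fun _ acc => (q ^ n + acc)%nat) 0%nat (seq 0 q)).
  - generalize (seq 0 q). induction l; simpl; auto. rewrite length_app, length_map, IHn, IHl; auto.
  - assert (H : forall len s k, fold_right (fun _ acc => (k + acc)%nat) 0%nat (seq s len) = (len * k)%nat).
    { induction len; intros; simpl; auto. }
    rewrite H; lia.
Qed.

Lemma words_word q n x : In x (words q n) -> is_word q n x.
Proof.
  revert x; induction n; simpl; intros x Hx.
  - destruct Hx as [<-|[]]. split; auto.
  - apply in_flat_map in Hx as [b [Hb Hx]]. apply in_map_iff in Hx as [y [<- Hy]].
    apply in_seq in Hb. destruct (IHn y Hy) as [H1 H2]. split; simpl; auto.
    constructor; auto; lia.
Qed.

Fixpoint cnt (q n r : nat) : nat :=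
  match n with
  | O => 1
  | S n' => (cnt q n' r + (q - 1) * match r with O => O | S r' => cnt q n' r' end)%nat
  end.

Lemma fold_special (a A Bv q : nat) : (a < q)%nat ->
  fold_right (fun b acc => ((if Nat.eqb a b then A else Bv) + acc)%nat) 0%nat (seq 0 q)
  = (A + (q - 1) * Bv)%nat.
Proof.
  intros Ha.
  assert (H : forall len s, fold_right (fun b acc => ((if Nat.eqb a b then A else Bv) + acc)%nat) 0%nat (seq s len)
    = if andb (s <=? a) (a <? s + len) then (A + (len - 1) * Bv)%nat else (len * Bv)%nat).
  { induction len; intros s; simpl.
    - destruct (s <=? a) eqn:E1; destruct (a <? s + 0) eqn:E2; simpl; auto.
      apply Nat.ltb_lt in E2; apply Nat.leb_le in E1; lia.
    - rewrite IHlen. destruct (Nat.eqb a s) eqn:E.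
      + apply Nat.eqb_eq in E; subst.
        replace (S s <=? s) with false by (symmetry; apply Nat.leb_gt; lia).
        rewrite Nat.leb_refl. replace (s <? s + S len) with true by (symmetry; apply Nat.ltb_lt; lia).
        simpl. lia.
      + apply Nat.eqb_neq in E.
        destruct (S s <=? a) eqn:E1; destruct (a <? S s + len) eqn:E2;
        destruct (s <=? a) eqn:E3; destruct (a <? s + S len) eqn:E4; simpl;
        repeat match goal with H : (_ <=? _) = true |- _ => apply Nat.leb_le in H
          | H : (_ <=? _) = false |- _ => apply Nat.leb_gt in H
          | H : (_ <? _) = true |- _ => apply Nat.ltb_lt in H
          | H : (_ <? _) = false |- _ => apply Nat.ltb_ge in H end; try lia.
        destruct len; [lia|]. simpl. lia. }
  rewrite H. replace (andb (0 <=? a) (a <? 0 + q)) with true; auto.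
  simpl. symmetry. apply Nat.ltb_lt; auto.
Qed.

Lemma fold_ext (f g : nat -> nat) l : (forall b, In b l -> f b = g b) ->
  fold_right (fun b acc => (f b + acc)%nat) 0%nat l = fold_right (fun b acc => (g b + acc)%nat) 0%nat l.
Proof. induction l; simpl; intros H; auto. Qed.

Lemma length_filter_map {A B} (p : B -> bool) (f : A -> B) l :
  length (filter p (map f l)) = length (filter (fun y => p (f y)) l).
Proof. induction l; simpl; auto. destruct (p (f a)); simpl; auto. Qed.

Lemma ball_count q n : forall x r, is_word q n x ->
  length (filter (fun y => hdist x y <=? r) (words q n)) = cnt q n r.
Proof.
  induction n; intros x r [Hl Hf].
  - destruct x; simpl in Hl; try lia. simpl. reflexivity.
  - destruct x as [|a x]; simpl in Hl; try lia. inversion Hf; subst.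
    simpl words. rewrite length_flat_map_filter.
    assert (Hw : is_word q n x) by (split; auto).
    rewrite (fold_ext _ (fun b => if Nat.eqb a b then cnt q n r else
        match r with O => O | S r' => cnt q n r' end)).
    + rewrite fold_special by auto. simpl. reflexivity.
    + intros b _. rewrite length_filter_map. simpl.
      destruct (Nat.eqb a b).
      * simpl. apply IHn; auto.
      * destruct r as [|r'].
        -- rewrite (filter_ext _ (fun _ => false)). 
           ++ generalize (words q n); induction l; simpl; auto.
           ++ intros y. reflexivity.
        -- rewrite (filter_ext _ (fun y => hdist x y <=? r')). apply IHn; auto.
           intros y. reflexivity.
Qed.

Fixpoint binom (n k : nat) : nat :=
  match n, k with
  | _, O => 1%nat
  | O, S _ => 0%nat
  | S n', S k' => (binom n' k' + binom n' (S k'))%nat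
  end.

Lemma binom_n0 n : binom n 0 = 1%nat.
Proof. destruct n; reflexivity. Qed.

Lemma binom_big n k : (n < k)%nat -> binom n k = 0%nat.
Proof.
  revert k; induction n; intros [|k] H; simpl; try lia; auto.
  rewrite !IHn; lia.
Qed.

Lemma C_0 n : Binomial.C n 0 = 1.
Proof. unfold Binomial.C. rewrite Nat.sub_0_r. simpl. field. apply INR_fact_neq_0. Qed.

Lemma C_nn n : Binomial.C n n = 1.
Proof. unfold Binomial.C. rewrite Nat.sub_diag. simpl. field. apply INR_fact_neq_0. Qed.

Lemma binom_C n k : (k <= n)%nat -> INR (binom n k) = Binomial.C n k.
Proof.
  revert k; induction n; intros [|k] H.
  - simpl. rewrite C_0; auto.
  - lia.
  - simpl binom. rewrite C_0; auto.
  - simpl binom. rewrite plus_INR.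
    destruct (Nat.eq_dec k n) as [->|Hne].
    + rewrite (binom_big n (S n)) by lia. rewrite IHn by lia. rewrite !C_nn. simpl. lra.
    + rewrite !IHn by lia. apply pascal. lia.
Qed.

Definition g (q n r : nat) : R :=
  sum_f_R0 (fun i => INR (binom n i) * (INR q - 1) ^ i) r.

Lemma g_pascal q n r : g q (S n) (S r) = g q n (S r) + (INR q - 1) * g q n r.
Proof.
  unfold g. induction r.
  - simpl. rewrite !plus_INR, !binom_n0. simpl. ring.
  - rewrite (tech5 _ (S r)), IHr, (tech5 _ (S r)), (tech5 _ r).
    replace (binom (S n) (S (S r))) with (binom n (S r) + binom n (S (S r)))%nat by reflexivity.
    rewrite plus_INR. simpl pow. ring.
Qed.

Lemma g_zero q r : g q 0 r = 1.
Proof.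
  unfold g. induction r.
  - simpl. lra.
  - rewrite tech5, IHr. simpl. lra.
Qed.

Lemma cnt_g q n r : (1 <= q)%nat -> INR (cnt q n r) = g q n r.
Proof.
  intros Hq. revert r; induction n; intros r.
  - simpl. rewrite g_zero; auto.
  - destruct r as [|r].
    + simpl cnt. rewrite Nat.mul_0_r, Nat.add_0_r, IHn. unfold g; simpl. rewrite !binom_n0. simpl. lra.
    + simpl cnt. rewrite plus_INR, mult_INR, minus_INR by lia. rewrite !IHn, g_pascal. simpl. ring.
Qed.

Lemma cnt_V q w d : (1 <= q)%nat -> (d <= w)%nat -> INR (cnt q w d) = Vball w d q.
Proof.
  intros Hq Hd. rewrite cnt_g by auto. unfold g, Vball. apply sum_eq. intros i Hi.
  rewrite binom_C by lia. auto.
Qed.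

Theorem theorem5 (w d q : nat) (hw : (1 <= w)%nat) (hd : (d <= w)%nat)
  (hq : (2 <= q)%nat) (c : R)
  (hc : c < 1 - / INR w * logq q (Vball w d q)) :
  exists (n : nat) (F : list (list nat)),
    (1 <= n)%nat /\ (1 <= length F)%nat /\ is_code q n F /\ zero_error w d n F /\
    c < logq q (INR (length F)) / INR n.
Proof.
  destruct (greedy d (cnt q w d) (length (words q w)) (words q w) (le_n _)) as [C [HN [Hi [Hp Hl]]]].
  { intros x Hx. rewrite ball_count; auto. apply words_word; auto. }
  rewrite words_length in Hl.
  assert (HqR : 1 < INR q) by (apply lt_1_INR; lia).
  assert (HwR : 0 < INR w) by (apply lt_0_INR; lia).
  assert (Hpos : (0 < q ^ w)%nat) by (apply Nat.neq_0_lt_0, Nat.pow_nonzero; lia).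
  assert (HC1 : (1 <= length C)%nat).
  { destruct C; simpl in Hl |- *; lia. }
  exists w, C. split; [auto|]. split; [auto|]. split; [|split].
  - split; auto. apply Forall_forall. intros x Hx. apply words_word, Hi; auto.
  - intros x1 x2 v1 v2 H1 H2 [Hv1 [init [Hinit Hwin]]] [Hv2 _] Ho.
    destruct (list_eq_dec Nat.eq_dec x1 x2) as [|Hne]; auto. exfalso.
    assert (Hd := Hp x1 x2 H1 H2 Hne).
    destruct (words_word _ _ _ (Hi _ H1)) as [Hl1 _].
    destruct (words_word _ _ _ (Hi _ H2)) as [Hl2 _].
    assert (Ho' := dist_output x1 x2 v1 v2 ltac:(lia) ltac:(lia) ltac:(lia) Ho).
    assert (Hw := Hwin w ltac:(rewrite length_app; lia)).
    rewrite skipn_app, skipn_all2 in Hw by lia.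
    replace (w - length init)%nat with 0%nat in Hw by lia. simpl in Hw.
    rewrite firstn_all2 in Hw by lia. lia.
  - assert (Hineq : INR (q ^ w) <= INR (length C) * Vball w d q).
    { rewrite <- cnt_V by lia. rewrite <- mult_INR. apply le_INR. lia. }
    rewrite pow_INR in Hineq.
    set (V := Vball w d q) in *. set (Cn := INR (length C)) in *.
    assert (HCn : 1 <= Cn) by (unfold Cn; apply (le_INR 1); auto).
    assert (Hqw : 0 < INR q ^ w) by (apply pow_lt; lra).
    assert (HV : 0 < V).
    { destruct (Rle_or_lt V 0); auto. assert (Cn * V <= 0) by nra. lra. }
    assert (Hln : ln (INR q ^ w) <= ln (Cn * V)).
    { destruct (Rle_lt_or_eq_dec _ _ Hineq) as [Hlt|Heq].
      - left; apply ln_increasing; auto.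
      - rewrite Heq; lra. }
    rewrite ln_pow, ln_mult in Hln by lra.
    assert (HL : 0 < ln (INR q)) by (rewrite <- ln_1; apply ln_increasing; lra).
    unfold logq in *.
    assert (Heq : ln Cn / ln (INR q) / INR w - (1 - / INR w * (ln V / ln (INR q)))
       = (ln Cn + ln V - INR w * ln (INR q)) / (INR w * ln (INR q))) by (field; lra).
    assert (0 <= (ln Cn + ln V - INR w * ln (INR q)) / (INR w * ln (INR q))).
    { apply Rmult_le_pos. lra. left. apply Rinv_0_lt_compat. nra. }
    lra.
Qed.
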